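(* Let $\mathcal{C}$ be a $k$-linear category with exponential algebraic growth. Then there exist an object $L$ of $\mathcal{C}$ and a finite set $\Sigma$ of morphisms of $\mathcal{C}$ such that $\limsup_n\frac1n\log\dim_k W_\Sigma(n;L)>0$.
   Context: For a $k$-linear category $\mathcal{C}$, finite set $\Sigma$ of morphisms and $n\ge1$, $W_\Sigma(n)\subset\bigoplus_{K,L}\hom(K,L)$ is the $k$-span of all composable words $a_1\cdots a_l$ with $a_i\in\Sigma$, $l\le n$, and $W_\Sigma(n;L)\subset\hom(L,L)$ is the span of those such words which are endomorphisms of $L$. $\mathcal{C}$ has exponential algebraic growth if $\limsup_n\frac1n\log\dim_k W_\Sigma(n)>0$ for some finite $\Sigma$. *)

(* Defs.v *)
From HB Require Import structures.
From mathcomp Require Import all_boot all_order all_algebra.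
From mathcomp Require Import all_classical all_reals all_analysis.
From Stdlib Require List.
From Stdlib Require Import Rdefinitions.
From mathcomp Require Import Rstruct.

Set Implicit Arguments.
Unset Strict Implicit.
Unset Printing Implicit Defensive.
Import Order.TTheory GRing.Theory Num.Theory.
Local Open Scope ring_scope.

Record klinCat (k : fieldType) := KLinCat {
  Obj : Type;
  Hom : Obj -> Obj -> lmodType k;
  comp : forall A B C : Obj, Hom B C -> Hom A B -> Hom A C;
  idm : forall A : Obj, Hom A A;
  comp_idl : forall A B (f : Hom A B), comp (idm B) f = f;
  comp_idr : forall A B (f : Hom A B), comp f (idm A) = f;
  comp_assoc : forall A B C D (h : Hom C D) (g : Hom B C) (f : Hom A B),
      comp h (comp g f) = comp (comp h g) f;
  comp_linl : forall A B C (a : k) (g1 g2 : Hom B C) (f : Hom A B),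
      comp (a *: g1 + g2) f = a *: comp g1 f + comp g2 f;
  comp_linr : forall A B C (a : k) (g : Hom B C) (f1 f2 : Hom A B),
      comp g (a *: f1 + f2) = a *: comp g f1 + comp g f2
}.

Arguments Obj {k}.
Arguments Hom {k} C : rename.
Arguments comp {k} C {A B C0} : rename.

Definition Mor k (C : klinCat k) := {K : Obj C & {L : Obj C & Hom C K L}}.

Definition mkMor k (C : klinCat k) (K L : Obj C) (f : Hom C K L) : Mor C :=
  existT _ K (existT _ L f).

Inductive isWord k (C : klinCat k) (S : seq (Mor C))
  : nat -> forall K L : Obj C, Hom C K L -> Prop :=
| isWord1 K L (f : Hom C K L) :
    List.In (mkMor f) S -> isWord S 1 f
| isWordS l K L M (f : Hom C K L) (g : Hom C L M) :
    isWord S l f -> List.In (mkMor g) S -> isWord S l.+1 (comp C g f).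

(* Words of length 1 <= l <= n, as elements of (+)_{K,L} hom(K,L). *)
Definition Wgen k (C : klinCat k) (S : seq (Mor C)) (n : nat) : set (Mor C) :=
  fun x => exists l : nat, [/\ leq 1 l, leq l n &
      isWord S l (projT2 (projT2 x))].

Definition WgenL k (C : klinCat k) (S : seq (Mor C)) (n : nat) (L : Obj C)
  : set (Mor C) :=
  fun x => Wgen S n x /\ projT1 x = L /\ projT1 (projT2 x) = L.

(* The (K,L)-component of an element of (+)_{K,L} hom(K,L). *)
Definition comp_at k (C : klinCat k) (K L : Obj C) (x : Mor C) : Hom C K L :=
  match x with
  | existT K' (existT L' f) =>
    match pselect (K' = K) with
    | left e1 =>
      match pselect (L' = L) with
      | left e2 =>
          eq_rect L' (fun Y => Hom C K Y)
            (eq_rect K' (fun X => Hom C X L') f K e1) L e2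
      | right _ => 0
      end
    | right _ => 0
    end
  end.

(* Linear independence of a finite family x_0..x_{m-1} in
   (+)_{K,L} hom(K,L): a linear combination vanishes iff all its
   components vanish. *)
Definition lin_indep k (C : klinCat k) (m : nat) (x : 'I_m -> Mor C) : Prop :=
  forall c : 'I_m -> k,
    (forall K L : Obj C, \sum_(i < m) c i *: comp_at K L (x i) = 0) ->
    forall i, c i = 0.

Definition isDimSpan k (C : klinCat k) (P : set (Mor C)) (d : nat) : Prop :=
  (exists x : 'I_d -> Mor C, (forall i, P (x i)) /\ lin_indep x) /\
  (forall m (x : 'I_m -> Mor C), (forall i, P (x i)) -> lin_indep x -> leq m d).

(* dim_k span(P) (used only for finitely generated spans). *)
Definition dimSpan k (C : klinCat k) (P : set (Mor C)) : nat :=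
  xget 0%N [set d | isDimSpan P d].

Definition growth (d : nat -> nat) : \bar Rdefinitions.R :=
  limn_esup (fun n => (ln (d n)%:R / n%:R)%:E).

Definition exp_alg_growth k (C : klinCat k) : Prop :=
  exists S : seq (Mor C), (0 < growth (fun n => dimSpan (Wgen S n)))%E.

(* Main.v *)
From HB Require Import structures.
Require Import Defs.
From mathcomp Require Import all_boot all_order all_algebra.
From mathcomp Require Import all_classical all_reals all_analysis.
From Stdlib Require Import Rdefinitions.
From mathcomp Require Import Rstruct.
From mathcomp Require Import ring lra zify.
Set Implicit Arguments.
Unset Strict Implicit.
Unset Printing Implicit Defensive.
Import Order.TTheory GRing.Theory Num.Theory.
Local Open Scope ring_scope.

Lemma limsupE (u : (\bar R)^nat) : limn_esup u = ereal_inf (range (esups u)).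
Proof. rewrite limn_esup_lim. apply: cvg_lim; last exact: cvg_esups_inf. exact: ereal_hausdorff. Qed.

Lemma growth_pos (d : nat -> nat) : (0 < growth d)%E ->
  exists e : R, 0 < e /\ forall N : nat, exists n : nat, leq N n /\ e < ln (d n)%:R / n%:R.
Proof.
rewrite /growth limsupE.
set I := ereal_inf _ => I0.
have [e [e0 eI]] : exists e : R, 0 < e /\ (e%:E < I)%E.
  move: I0; case: I => [r| |] //=.
  - rewrite lte_fin => r0; exists (r/2); split; first lra.
    by rewrite lte_fin; lra.
  - by move=> _; exists 1; split => //; rewrite ltry.
exists e; split => // N.
have : (e%:E < esups (fun n => (ln (d n)%:R / n%:R)%:E) N)%E.
  apply: (lt_le_trans eI); apply: ereal_inf_lbound; by exists N.
move=> /ereal_sup_gt [y [n /= Nn <-]]; rewrite lte_fin => ?.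
by exists n.
Qed.

Lemma growth_pos2 (d : nat -> nat) (e : R) : 0 < e ->
  (forall N : nat, exists n : nat, leq N n /\ e <= ln (d n)%:R / n%:R) ->
  (0 < growth d)%E.
Proof.
move=> e0 H; rewrite /growth limsupE.
apply: (@lt_le_trans _ _ e%:E); first by rewrite lte_fin.
apply: le_ereal_inf_tmp => _ [N _ <-].
have [n [Nn en]] := H N.
apply: (@le_trans _ _ (ln (d n)%:R / n%:R)%:E); first by rewrite lee_fin.
by apply: ereal_sup_ubound; exists n.
Qed.

Section Span.
Variables (k : fieldType) (C : klinCat k).
Local Notation Mor := (Mor C).
Local Notation Hom := (Defs.Hom C).
Local Notation cmp := (@Defs.comp _ C _ _ _).

Definition toV (x : Mor) := fun K L => comp_at K L x.

Inductive vspan (s : seq Mor) : (forall K L : Obj C, Hom K L) -> Prop :=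
| vs_in x w : List.In x s -> (forall K L, w K L = comp_at K L x) -> vspan s w
| vs_zero w : (forall K L, w K L = 0) -> vspan s w
| vs_comb a u v w : vspan s u -> vspan s v ->
    (forall K L, w K L = a *: u K L + v K L) -> vspan s w.

Lemma vspan_ext s w w' : vspan s w -> (forall K L, w' K L = w K L) -> vspan s w'.
Proof.
case=> [x w0 Hx E|w0 E|a u v w0 Hu Hv E] E'.
- by apply: (vs_in Hx) => K L; rewrite E' E.
- by apply: vs_zero => K L; rewrite E' E.
- by apply: (@vs_comb _ a _ _ _ Hu Hv) => K L; rewrite E' E.
Qed.

Lemma vspan_mono s t w : vspan s w -> (forall x, List.In x s -> List.In x t) ->
  vspan t w.
Proof.
move=> H st; elim: H => [x w0 Hx E|w0 E|a u v w0 _ Hu _ Hv E].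
- exact: (vs_in (st _ Hx)).
- exact: vs_zero.
- exact: (@vs_comb _ a _ _ _ Hu Hv).
Qed.

Lemma comp_at_same K L (f : Hom K L) : comp_at K L (mkMor f) = f.
Proof.
rewrite /comp_at /mkMor; case: pselect => [e1|//]; case: pselect => [e2|//].
by rewrite (Prop_irrelevance e1 erefl) (Prop_irrelevance e2 erefl).
Qed.

Lemma comp_at_lin K L K' L' (a : k) (f g : Hom K L) :
  comp_at K' L' (mkMor (a *: f + g)) =
  a *: comp_at K' L' (mkMor f) + comp_at K' L' (mkMor g).
Proof.
rewrite /comp_at /mkMor; case: pselect => [e1|_]; last by rewrite scaler0 addr0.
case: pselect => [e2|_]; last by rewrite scaler0 addr0.
by destruct e1, e2.
Qed.

Lemma comp_at_0 K L K' L' : comp_at K' L' (mkMor (0 : Hom K L)) = 0.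
Proof.
rewrite /comp_at /mkMor; case: pselect => [e1|//]; case: pselect => [e2|//].
by destruct e1, e2.
Qed.

Inductive hspan K L (s : seq (Hom K L)) : Hom K L -> Prop :=
| hs_in f : f \in s -> hspan s f
| hs_zero : hspan s 0
| hs_comb a f g : hspan s f -> hspan s g -> hspan s (a *: f + g).

Lemma In_map_seq (A B : Type) (f : A -> B) x s : List.In x s -> List.In (f x) (map f s).
Proof. elim: s => //= y s IH [->|/IH]; by [left|right]. Qed.

Lemma in_In (T : eqType) (x : T) s : x \in s -> List.In x s.
Proof. elim: s => //= y s IH; rewrite in_cons => /orP[/eqP->|/IH]; by [left|right]. Qed.

Lemma In_flatten (A B : Type) (F : A -> seq B) x y s :
  List.In x s -> List.In y (F x) -> List.In y (flatten (map F s)).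
Proof.
elim: s => //= z s IH [<-|/IH H] Hy; apply/List.in_or_app; by [left|right; apply: H].
Qed.

Lemma in_flatten_sub K L (A : Type) (F : A -> seq (Hom K L)) x s :
  List.In x s -> {subset F x <= flatten (map F s)}.
Proof.
elim: s => //= z s IH [<-|/IH H] y Hy; rewrite mem_cat ?Hy //.
by rewrite H ?orbT.
Qed.

Lemma size_flatten_le (A B : Type) (F : A -> seq B) s b :
  (forall x, (size (F x) <= b)%nat) -> (size (flatten (map F s)) <= size s * b)%nat.
Proof.
move=> H; elim: s => //= x s IH; rewrite size_cat mulSn.
by apply: leq_add.
Qed.

Lemma In_nth_ord (d x : Mor) s : List.In x s -> exists i : 'I_(size s), nth d s i = x.
Proof.
elim: s => //= y s IH [->|/IH [i Hi]].
  by exists ord0.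
by exists (lift ord0 i).
Qed.

Lemma hspan_vspan K L (s : seq (Hom K L)) f :
  hspan s f -> vspan (map (@mkMor _ C K L) s) (toV (mkMor f)).
Proof.
elim=> [g Hg|| a g h _ Hg _ Hh].
- by apply: (vs_in (In_map_seq _ (in_In Hg))).
- by apply: vs_zero => K' L'; rewrite /toV comp_at_0.
- by apply: (@vs_comb _ a _ _ _ Hg Hh) => K' L'; rewrite /toV comp_at_lin.
Qed.

Lemma hspan_mono K L (s t : seq (Hom K L)) f : hspan s f -> {subset s <= t} -> hspan t f.
Proof.
move=> H st; elim: H => [g Hg||a g h _ Hg _ Hh].
- by apply: hs_in; apply: st.
- exact: hs_zero.
- exact: hs_comb.
Qed.

Lemma In_map_in K L (s : seq Mor) x : List.In x s ->
  comp_at K L x \in map (comp_at K L) s.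
Proof. elim: s => //= y s IH [->|/IH H]; rewrite in_cons ?eqxx ?H ?orbT //. Qed.

Lemma vspan_eval K L s w : vspan s w -> hspan (map (comp_at K L) s) (w K L).
Proof.
elim=> [x w0 Hx E|w0 E|a u v w0 _ Hu _ Hv E].
- by rewrite E; apply: hs_in; apply: In_map_in.
- by rewrite E; apply: hs_zero.
- by rewrite E; apply: hs_comb.
Qed.

Lemma cmp0l K L M (f : Hom K L) : cmp (0 : Hom L M) f = 0.
Proof.
have := comp_linl (-1) (0 : Hom L M) 0 f.
by rewrite scaler0 addr0 scaleN1r addNr.
Qed.

Lemma cmp0r K L M (g : Hom L M) : cmp g (0 : Hom K L) = 0.
Proof.
have := comp_linr (-1) g (0 : Hom K L) 0.
by rewrite scaler0 addr0 scaleN1r addNr.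
Qed.

Lemma hspan_compl K L M (t : seq (Hom L M)) g (f : Hom K L) :
  hspan t g -> hspan [seq cmp y f | y <- t] (cmp g f).
Proof.
elim=> [h Hh||a h1 h2 _ H1 _ H2].
- by apply: hs_in; apply: map_f.
- by rewrite cmp0l; apply: hs_zero.
- by rewrite comp_linl; apply: hs_comb.
Qed.

Lemma hspan_bil K L M (t : seq (Hom L M)) (u : seq (Hom K L)) g f :
  hspan t g -> hspan u f -> hspan [seq cmp y x | y <- t, x <- u] (cmp g f).
Proof.
move=> Hg Hf; elim: Hg => [h Hh||a h1 h2 _ H1 _ H2].
- elim: Hf => [x Hx||b x1 x2 _ H1 _ H2].
  + by apply: hs_in; apply: allpairs_f.
  + by rewrite cmp0r; apply: hs_zero.
  + by rewrite comp_linr; apply: hs_comb.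
- by rewrite cmp0l; apply: hs_zero.
- by rewrite comp_linl; apply: hs_comb.
Qed.


Lemma vspan_coef s w (d : Mor) : vspan s w -> exists c : 'I_(size s) -> k,
  forall K L, w K L = \sum_(i < size s) c i *: comp_at K L (nth d s i).
Proof.
elim=> [x w0 Hx E|w0 E|a u v w0 _ [c1 H1] _ [c2 H2] E].
- have [i Hi] := In_nth_ord d Hx.
  exists (fun j => (j == i)%:R) => K L; rewrite E (bigD1 i) //= eqxx scale1r Hi.
  by rewrite big1 ?addr0 // => j /negbTE ->; rewrite scale0r.
- by exists (fun _ => 0) => K L; rewrite E big1 // => j _; rewrite scale0r.
- exists (fun j => a * c1 j + c2 j) => K L; rewrite E H1 H2 scaler_sumr -big_split.
  by apply: eq_bigr => j _; rewrite scalerDl scalerA.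
Qed.

Lemma coef_vspan d (x : 'I_d -> Mor) (a : 'I_d -> k) w :
  (forall K L, w K L = \sum_(j < d) a j *: comp_at K L (x j)) ->
  vspan (map x (enum 'I_d)) w.
Proof.
move=> E; apply: vspan_ext (E).
have: forall r : seq 'I_d, vspan (map x (enum 'I_d))
   (fun K L => \sum_(j <- r) a j *: comp_at K L (x j)).
  elim=> [|j r IH].
    by apply: vs_zero => K L; rewrite big_nil.
  apply: (@vs_comb _ (a j) (fun K L => comp_at K L (x j)) _ _ _ IH).
    by apply: (vs_in (In_map_seq _ (in_In _))); rewrite ?mem_enum.
  by move=> K L; rewrite big_cons.
by apply.
Qed.

Lemma steinitz s m (x : 'I_m -> Mor) : (forall i, vspan s (toV (x i))) ->
  lin_indep x -> (m <= size s)%nat.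
Proof.
move=> Hx Hind; rewrite leqNgt; apply/negP => Hlt.
have m0 : (0 < m)%nat by move: Hlt; case: m {x Hx Hind}.
pose d := x (Ordinal m0).
have /choice [cf Hcf] : forall i, exists c : 'I_(size s) -> k,
    forall K L, comp_at K L (x i) = \sum_(j < size s) c j *: comp_at K L (nth d s j).
  by move=> i; exact: (vspan_coef d (Hx i)).
pose M : 'M[k]_(m, size s) := \matrix_(i, j) cf i j.
have : kermx M != 0.
  rewrite -mxrank_eq0 mxrank_ker; apply/eqP => H.
  have := rank_leq_col M; move: H; lia.
move=> /eqP Hk.
have [i Hi] : exists i, row i (kermx M) != 0.
  apply/existsP; rewrite -negb_forall; apply/negP => /forallP H; apply: Hk.
  by apply/row_matrixP => i; rewrite row0; apply/eqP; exact: H.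
pose u := row i (kermx M).
have uM : u *m M = 0 by rewrite /u -row_mul mulmx_ker row0.
have := Hind (fun j => u 0 j).
have Hsum : forall K L, \sum_(i0 < m) u 0 i0 *: comp_at K L (x i0) = 0.
  move=> K L.
  under eq_bigr => i0 _ do rewrite (Hcf i0 K L) scaler_sumr.
  rewrite exchange_big /=; apply: big1 => j _.
  under eq_bigr => i0 _ do rewrite scalerA.
  rewrite -scaler_suml.
  have : (u *m M) 0 j = 0 by rewrite uM mxE.
  rewrite mxE => Hj.
  rewrite (_ : \sum_(i1 < m) u 0 i1 * cf i1 j = 0) ?scale0r //.
  by rewrite -[X in _ = X]Hj; apply: eq_bigr => i1 _; rewrite [M _ _]mxE.
move=> /(_ Hsum) H0; apply/negP: Hi; rewrite negbK; apply/eqP/rowP => j.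
by move: (H0 j); rewrite /u !mxE.
Qed.


Lemma basis_span P d (x : 'I_d -> Mor) : (forall i, P (x i)) -> lin_indep x ->
  (forall m (y : 'I_m -> Mor), (forall i, P (y i)) -> lin_indep y -> (m <= d)%nat) ->
  forall z, P z -> vspan (map x (enum 'I_d)) (toV z).
Proof.
move=> Px Hx Hmax z Pz.
pose y : 'I_d.+1 -> Mor := fun i => if unlift ord0 i is Some j then x j else z.
have Py : forall i, P (y i) by move=> i; rewrite /y; case: unlift.
have Hnli : ~ lin_indep y by move=> /(Hmax _ _ Py); rewrite ltnn.
have yl : forall j, y (lift ord0 j) = x j by move=> j; rewrite /y liftK.
have y0 : y ord0 = z by rewrite /y unlift_none.
have [c [Hc c0]] : exists c : 'I_d.+1 -> k,
    (forall K L, \sum_i c i *: comp_at K L (y i) = 0) /\ c ord0 != 0.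
  apply: contrapT => Hno; apply: Hnli => c Hc.
  have c0 : c ord0 = 0.
    by apply/eqP; apply/negPn/negP => H; apply: Hno; exists c.
  have Hc' : forall K L, \sum_(j < d) c (lift ord0 j) *: comp_at K L (x j) = 0.
    move=> K L; have := Hc K L; rewrite big_ord_recl c0 scale0r add0r.
    by under eq_bigr => j _ do rewrite yl.
  move=> i; case: (unliftP ord0 i) => [j ->|->] //.
  exact: Hx Hc' j.
apply: (coef_vspan (a := fun j => - (c ord0)^-1 * c (lift ord0 j))) => K L.
have := Hc K L; rewrite big_ord_recl y0.
under eq_bigr => j _ do rewrite yl.
move/eqP; rewrite addr_eq0 => /eqP H.
have -> : toV z K L = (c ord0)^-1 *: (c ord0 *: comp_at K L z).
  by rewrite scalerA mulVf // scale1r.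
rewrite H scalerN scaler_sumr -sumrN; apply: eq_bigr => j _.
by rewrite scalerA mulNr scaleNr.
Qed.

Lemma max_exists (Q : nat -> Prop) N : Q 0%nat ->
  (forall m, Q m -> (m <= N)%nat) -> exists d, Q d /\ forall m, Q m -> (m <= d)%nat.
Proof.
elim: N Q => [|N IH] Q Q0 HQ.
  by exists 0%nat; split => // m /HQ.
case: (pselect (Q N.+1)) => [QN|nQ]; first by exists N.+1.
apply: IH => // m Qm; have := HQ m Qm; rewrite leq_eqVlt => /orP[/eqP Hm|//].
by subst m.
Qed.

Lemma dim_spec (P : set Mor) s : (forall z, P z -> vspan s (toV z)) ->
  isDimSpan P (dimSpan P).
Proof.
move=> HP.
pose Q := fun m => exists x : 'I_m -> Mor, (forall i, P (x i)) /\ lin_indep x.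
have Q0 : Q 0%nat.
  have f0 : 'I_0 -> Mor by case=> m; rewrite ltn0.
  by exists f0; split => [[m Hm]|c _ [m Hm]]; exfalso; rewrite ltn0 in Hm.
have QN : forall m, Q m -> (m <= size s)%nat.
  move=> m [x [Px Hx]]; apply: (steinitz (s := s) _ Hx) => i; exact: HP.
have [d [[x [Px Hx]] Hd]] := max_exists Q0 QN.
apply: (@xgetPex nat 0%nat (fun d0 => isDimSpan P d0)).
exists d; split.
  by exists x.
by move=> m y Py Hy; apply: Hd; exists y.
Qed.

Lemma dim_le (P : set Mor) s : (forall z, P z -> vspan s (toV z)) ->
  (dimSpan P <= size s)%nat.
Proof.
move=> HP; have [[x [Px Hx]] _] := dim_spec HP.
by apply: (steinitz _ Hx) => i; apply: HP.
Qed.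

Lemma dim_basis (P : set Mor) s : (forall z, P z -> vspan s (toV z)) ->
  exists b : seq Mor, size b = dimSpan P /\ forall z, P z -> vspan b (toV z).
Proof.
move=> HP; have [[x [Px Hx]] Hm] := dim_spec HP.
exists (map x (enum 'I_(dimSpan P))); split; first by rewrite size_map size_enum_ord.
exact: basis_span.
Qed.

End Span.

Section Words.
Variables (k : fieldType) (C : klinCat k) (S : seq (Mor C)).
Local Notation Mor := (Mor C).
Local Notation Hom := (Defs.Hom C).
Local Notation cmp := (@Defs.comp _ C _ _ _).

Definition objs : seq (Obj C) :=
  flatten (map (fun x : Mor => [:: projT1 x; projT1 (projT2 x)]) S).

Lemma letter_objs K L (f : Hom K L) : List.In (mkMor f) S ->
  List.In K objs /\ List.In L objs.
Proof.
move=> H; split; apply: (In_flatten (x := mkMor f)) => //=; by [left|right;left].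
Qed.

Lemma isWord_l1 l K L (f : Hom K L) : isWord S l f -> (1 <= l)%nat.
Proof. by case. Qed.

Lemma isWord_objs l K L (f : Hom K L) : isWord S l f ->
  List.In K objs /\ List.In L objs.
Proof.
elim=> [K0 L0 f0 /letter_objs //|l0 K0 L0 M0 f0 g0 _ [H1 _] /letter_objs [_ H2]].
by [].
Qed.

Definition mcomp (g x : Mor) : Mor :=
  mkMor (cmp (comp_at (projT1 (projT2 x)) (projT1 (projT2 g)) g) (projT2 (projT2 x))).

Fixpoint wl (l : nat) : seq Mor :=
  match l with
  | 0%nat => S
  | l'.+1 => flatten (map (fun x => map (fun g => mcomp g x) S) (wl l'))
  end.

Definition aw (n : nat) : seq Mor := flatten (map wl (iota 0 n)).

Lemma isWord_wl l K L (f : Hom K L) : isWord S l f -> List.In (mkMor f) (wl l.-1).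
Proof.
elim=> [K0 L0 f0 //|l0 K0 L0 M0 f0 g0 Hw IH Hg].
have l1 := isWord_l1 Hw.
have -> : l0.+1.-1 = l0.-1.+1 by rewrite prednK.
apply: (In_flatten (x := mkMor f0)) => //.
have -> : mkMor (cmp g0 f0) = mcomp (mkMor g0) (mkMor f0).
  by change (mcomp (mkMor g0) (mkMor f0)) with (mkMor (cmp (comp_at L0 M0 (mkMor g0)) f0)); rewrite comp_at_same.
exact: In_map_seq.
Qed.

Lemma Wgen_vspan n z : Wgen S n z -> vspan (aw n) (toV z).
Proof.
case: z => K [L f] [l [l1 ln Hw]] /=.
apply: (vs_in (x := mkMor f)) => //.
apply: (In_flatten (x := l.-1)); last exact: isWord_wl.
apply: in_In; rewrite mem_iota /=; lia.
Qed.

Lemma WgenL_vspan n L z : WgenL S n L z -> vspan (aw n) (toV z).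
Proof. by case=> H _; apply: Wgen_vspan. Qed.

Inductive pw (P : Obj C -> Prop) : nat -> forall K L : Obj C, Hom K L -> Prop :=
| pw0 K : P K -> pw P 0 ((@idm _ C K))
| pwS l K L M (f : Hom K L) (g : Hom L M) :
    pw P l f -> List.In (mkMor g) S -> P M -> pw P l.+1 (cmp g f).

Lemma pw_src P l K L (f : Hom K L) : pw P l f -> P K.
Proof. by elim. Qed.

Lemma isWord_pw l K L (f : Hom K L) : isWord S l f -> pw (fun _ => True) l f.
Proof.
elim=> [K0 L0 f0 Hf|l0 K0 L0 M0 f0 g0 _ IH Hg].
  by rewrite -(comp_idr f0); apply: pwS => //; apply: pw0.
exact: pwS.
Qed.

Lemma pw_isWord P l K L (f : Hom K L) : pw P l f ->
  forall M (g : Hom L M), List.In (mkMor g) S -> isWord S l.+1 (cmp g f).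
Proof.
elim=> [K0 _|l0 K0 L0 M0 f0 g0 _ IH Hg _] M g Hg'.
  by rewrite comp_idr; apply: isWord1.
by apply: isWordS => //; apply: IH.
Qed.

Definition loopw n K (e : Hom K K) :=
  e = (@idm _ C K) \/ exists l', [/\ (1 <= l')%nat, (l' <= n)%nat & isWord S l' e].

Lemma loopw_mono n n' K (e : Hom K K) : (n <= n')%nat -> loopw n e -> loopw n' e.
Proof.
move=> nn [->|[l' [H1 H2 H3]]]; [by left|right; exists l'; split => //].
exact: leq_trans nn.
Qed.

Lemma decomp P l K L (f : Hom K L) : pw P l f ->
  (L = K /\ exists e : Hom K K, loopw l e /\ f = comp_at K L (mkMor e)) \/
  (exists M (e : Hom K K) (a : Hom K M) (w : Hom M L) l2,
     [/\ loopw l e /\ List.In (mkMor a) S, M <> K,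
         pw (fun y => P y /\ y <> K) l2 w, (l2 <= l)%nat & f = cmp w (cmp a e)]).
Proof.
elim=> [K0 PK|l0 K0 L0 M0 f0 g0 Hf IH Hg PM].
  left; split => //; exists ((@idm _ C K0)); split; first by left.
  by rewrite comp_at_same.
case: (pselect (M0 = K0)) => [EM|NM].
  subst M0; left; split => //; exists (cmp g0 f0); split; last by rewrite comp_at_same.
  right; exists l0.+1; split => //; exact: pw_isWord Hf _ _ Hg.
right; case: IH => [[EL [e [He Hfe]]]|[M [e [a [w [l2 [[He Ha] HM Hw Hl2 Hfe]]]]]]].
- subst L0; rewrite comp_at_same in Hfe; subst f0.
  exists M0, e, g0, ((@idm _ C M0)), 0%nat; split => //.
  + by split => //; exact: loopw_mono He.
  + by apply: pw0.
  + by rewrite comp_idl.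
- exists M, e, a, (cmp g0 w), l2.+1; split => //.
  + by split => //; exact: loopw_mono He.
  + by apply: pwS.
  + by rewrite Hfe comp_assoc.
Qed.

End Words.

Lemma le_asb (P Q : Prop) : (Q -> P) -> (`[< Q >] <= `[< P >])%nat.
Proof. by move=> H; case: (asboolP Q) => // /H; case: (asboolP P). Qed.

Lemma count_lt (T : Type) (P : T -> Prop) K s : List.In K s -> P K ->
  (count (fun y => `[< P y /\ y <> K >]) s < count (fun y => `[< P y >]) s)%nat.
Proof.
have Hle : forall K0 s', (count (fun y => `[< P y /\ y <> K0 >]) s' <= count (fun y => `[< P y >]) s')%nat.
  move=> K0; elim=> //= y s' IH; apply: leq_add => //; apply: le_asb; by case.
elim: s => //= y s IH [<-|/IH H] PK.
  have -> : `[< P y /\ y <> y >] = false by apply/negbTE/negP => /asboolP [].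
  have -> : `[< P y >] = true by apply/asboolP.
  have := Hle y s; rewrite /=; lia.
have := H PK; have : (`[< P y /\ y <> K >] <= `[< P y >])%nat by apply: le_asb; case.
lia.
Qed.

Section Main.
Variables (k : fieldType) (C : klinCat k) (S : seq (Mor C)) (n : nat).
Variables (B : Obj C -> seq (Mor C)) (D : nat).
Hypothesis HB : forall K, (size (B K) <= D)%nat.
Hypothesis HBs : forall K z, WgenL S n K z -> vspan (B K) (toV z).
Local Notation Mor := (Mor C).
Local Notation Hom := (Defs.Hom C).
Local Notation cmp := (@Defs.comp _ C _ _ _).

Definition Bs K : seq (Hom K K) := map (comp_at K K) (mkMor (@idm _ C K) :: B K).

Lemma loop_span K l (e : Hom K K) : (l <= n)%nat -> loopw S l e -> hspan (Bs K) e.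
Proof.
move=> ln [->|[l' [l1 l2 Hw]]].
  by apply: hs_in; rewrite /Bs map_cons in_cons comp_at_same eqxx.
have Hz : WgenL S n K (mkMor e).
  split => //; exists l'; split => //; exact: leq_trans ln.
have := vspan_eval K K (HBs Hz); rewrite /toV comp_at_same => H.
by apply: hspan_mono H _ => y Hy; rewrite /Bs map_cons in_cons Hy orbT.
Qed.

Lemma caseA K L l (e : Hom K K) : (l <= n)%nat -> loopw S l e -> L = K ->
  hspan (map (comp_at K L) (mkMor (@idm _ C K) :: B K)) (comp_at K L (mkMor e)).
Proof. by move=> ln He EL; subst L; rewrite comp_at_same; exact: loop_span He. Qed.

Lemma body P K L T :
  (P K -> List.In K (objs S) -> forall M, exists s : seq (Hom M L),
     (size s <= T)%nat /\ forall l (w : Hom M L), (l <= n)%nat ->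
        pw S (fun y => P y /\ y <> K) l w -> hspan s w) ->
  exists s : seq (Hom K L), (size s <= (1 + D) * (1 + size S * T))%nat /\
    forall l (f : Hom K L), (l <= n)%nat -> pw S P l f -> hspan s f.
Proof.
move=> IH.
pose A := map (comp_at K L) (mkMor (@idm _ C K) :: B K).
have sA : (size A <= 1 + D)%nat by rewrite size_map /= add1n ltnS HB.
have hA : forall l (f : Hom K L), (l <= n)%nat ->
    (L = K /\ exists e : Hom K K, loopw S l e /\ f = comp_at K L (mkMor e)) ->
    hspan A f.
  by move=> l f ln [EL [e [He ->]]]; apply: caseA He EL.
case: (pselect (P K /\ List.In K (objs S))) => [[PK HK]|NPK].
  have IH' := IH PK HK.
  pose sM := fun M => proj1_sig (cid (IH' M)).
  have HsM := fun M => proj2_sig (cid (IH' M)).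
  pose F := fun x : Mor => [seq cmp y b | y <- [seq cmp t (comp_at K (projT1 (projT2 x)) x)
                    | t <- sM (projT1 (projT2 x))], b <- Bs K].
  exists (A ++ flatten (map F S)); split.
    rewrite size_cat.
    have : (size (flatten (map F S)) <= size S * (T * (1 + D)))%nat.
      apply: size_flatten_le => x; rewrite /F size_allpairs size_map /Bs size_map /=.
      by apply: leq_mul; [exact: (proj1 (HsM _))|rewrite add1n ltnS HB].
    move: sA; nia.
  move=> l f ln Hf; case: (decomp Hf) => [HA|[M [e [a [w [l2 [[He Ha] HM Hw Hl2 Hfe]]]]]]].
    by apply: hspan_mono (hA l f ln HA) _ => y Hy; rewrite mem_cat Hy.
  rewrite Hfe comp_assoc.
  have Hw' : hspan (sM M) w := (proj2 (HsM M)) l2 w (leq_trans Hl2 ln) Hw.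
  have He' : hspan (Bs K) e := loop_span ln He.
  have -> : a = comp_at K M (mkMor a) by rewrite comp_at_same.
  have H2 := hspan_bil (hspan_compl (comp_at K M (mkMor a)) Hw') He'.
  apply: hspan_mono H2 _ => y Hy; rewrite mem_cat; apply/orP; right.
  exact: (in_flatten_sub (F := F) Ha).
exists A; split.
  apply: leq_trans sA _; nia.
move=> l f ln Hf; case: (decomp Hf) => [HA|[M [e [a [w [l2 [[He Ha] _ _ _ _]]]]]]].
  exact: hA HA.
by exfalso; apply: NPK; split; [exact: pw_src Hf|exact: (letter_objs Ha).1].
Qed.

Definition cst := ((1 + D) * (1 + size S))%nat.

Lemma span_walks : forall m P, (count (fun y => `[< P y >]) (objs S) <= m)%nat ->
  forall K L, exists s : seq (Hom K L), (size s <= expn cst m.+1)%nat /\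
    forall l (f : Hom K L), (l <= n)%nat -> pw S P l f -> hspan s f.
Proof.
elim=> [|m IHm] P HP K L.
  have [|s [Hs Hsp]] := @body P K L 1.
    by move=> PK HK; exfalso; have := count_lt HK PK; move: HP; lia.
  by exists s; split => //; apply: leq_trans Hs _; rewrite /cst muln1 expn1.
have [|s [Hs Hsp]] := @body P K L (expn cst m.+1).
  by move=> PK HK M; apply: IHm; have := count_lt HK PK; move: HP; lia.
exists s; split => //; apply: leq_trans Hs _.
have X1 : (0 < expn cst m.+1)%nat by rewrite expn_gt0 /cst muln_gt0.
have -> : expn cst m.+2 = (cst * (cst * expn cst m))%nat by rewrite !expnS.
move: X1; rewrite expnS; set Y := (cst * expn cst m)%nat => Y1.
rewrite {1}/cst -mulnA leq_mul2l; apply/orP; right.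
nia.
Qed.


Lemma dW_bound : (dimSpan (Wgen S n) <=
   size (objs S) * size (objs S) * expn cst (size (objs S)).+1)%nat.
Proof.
set q := size (objs S).
have Hall : forall K L, exists s : seq (Hom K L), (size s <= expn cst q.+1)%nat /\
    forall l (f : Hom K L), (l <= n)%nat -> pw S (fun _ => True) l f -> hspan s f.
  by move=> K L; apply: span_walks; exact: count_size.
pose sKL := fun K L => proj1_sig (cid (Hall K L)).
pose pairs := flatten (map (fun K => map (fun L => (K, L)) (objs S)) (objs S)).
pose big := flatten (map (fun p : Obj C * Obj C => map (@mkMor _ C p.1 p.2) (sKL p.1 p.2)) pairs).
apply: (@leq_trans (size big)).
  apply: dim_le; case=> K [L f] [l [l1 ln Hw]].
  have [HK HL] := isWord_objs Hw.
  have Hv := hspan_vspan (proj2 (proj2_sig (cid (Hall K L))) l f ln (isWord_pw Hw)).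
  apply: vspan_mono Hv _ => y Hy; apply: (In_flatten (x := (K, L))) => //.
  apply: (In_flatten (x := K)) => //; exact: (In_map_seq (fun L => (K, L)) HL).
have Hp : (size pairs <= q * q)%nat.
  by apply: size_flatten_le => x; rewrite size_map.
apply: (@leq_trans (size pairs * expn cst q.+1)).
  apply: size_flatten_le => p; rewrite size_map; exact: (proj1 (proj2_sig (cid (Hall _ _)))).
by apply: leq_mul.
Qed.

End Main.

Lemma le_bigmax_In (T : Type) (F : T -> nat) x s : List.In x s ->
  (F x <= \max_(y <- s) F y)%nat.
Proof.
elim: s => //= y s IH [<-|/IH H]; rewrite big_cons; first exact: leq_maxl.
exact: leq_trans H (leq_maxr _ _).
Qed.

Theorem mainTheorem14 (k : fieldType) (C : klinCat k) :
  exp_alg_growth C ->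
  exists (L : Obj C) (S : seq (Mor C)),
    (0 < growth (fun n => dimSpan (WgenL S n L)))%E.
Proof.
case=> S HS.
set q := size (objs S).
pose dW := fun n => dimSpan (Wgen S n).
pose dL := fun K n => dimSpan (WgenL S n K).
pose D := fun n => (\max_(K <- objs S) dL K n)%nat.
have F1 : forall n K, (dL K n <= D n)%nat.
  move=> n K; case: (pselect (List.In K (objs S))) => HK.
    exact: (le_bigmax_In (fun K => dL K n)).
  have -> : dL K n = 0%nat.
    apply/eqP; rewrite -leqn0; apply: (@dim_le _ _ _ [::]).
    case=> K' [L' f] [[l [l1 ln Hw]] [/= E1 _]]; subst K'.
    by exfalso; apply: HK; exact: (isWord_objs Hw).1.
  by [].
have F2 : forall n, (0 < D n)%nat -> exists K, List.In K (objs S) /\ D n = dL K n.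
  move=> n; rewrite /D; elim: (objs S) => [|y s IH]; first by rewrite big_nil.
  rewrite big_cons => Hpos.
  case: (leqP (dL y n) (\max_(K <- s) dL K n)) => H.
    rewrite (maxn_idPr H) in Hpos *; have [K [HK E]] := IH Hpos.
    by exists K; split => //; right.
  by exists y; split; [left|].

have F3 : forall n, (dW n <= q * q * expn ((1 + D n) * (1 + size S)) q.+1)%nat.
  move=> n.
  have Hb := fun K => dim_basis (@WgenL_vspan _ C S n K).
  pose B := fun K => proj1_sig (cid (Hb K)).
  apply: (@dW_bound _ C S n B (D n)).
    by move=> K; rewrite /B (proj1 (proj2_sig (cid (Hb K)))); exact: F1.
  by move=> K z Hz; exact: (proj2 (proj2_sig (cid (Hb K))) z Hz).
pose A0 := (q * q * expn (2 * (1 + size S)) q.+1)%nat.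
have F4 : forall n, (dW n <= A0 * expn (maxn 1 (D n)) q.+1)%nat.
  move=> n; apply: leq_trans (F3 n) _; rewrite /A0 -!mulnA; apply: leq_mul => //; apply: leq_mul => //.
  rewrite -expnMn leq_exp2r // mulnAC; apply: leq_mul => //; lia.
have [e [e0 He]] := growth_pos HS.
pose Q : R := (q.+1)%:R.
have Q0 : 0 < Q by rewrite ltr0n.
pose a : R := ln A0%:R.
have a0 : 0 <= a.
  rewrite /a; case: (posnP A0) => [->|A0p]; first by rewrite ln0.
  by apply: ln_ge0; rewrite ler1n.
pose e' := e / (2 * Q).
have e'0 : 0 < e' by rewrite /e' divr_gt0 // mulr_gt0.
have [N0 HN0] : exists N0 : nat, 2 * a / e < N0%:R.
  exists (Num.Def.archi_bound (2 * a / e)); apply: archi_boundP.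
  by rewrite divr_ge0 // ?mulr_ge0 // ltW.
apply: contrapT => Hno.
have HNL : forall L, exists N : nat, forall n : nat, (N <= n)%nat ->
    ln (dL L n)%:R / n%:R < e'.
  move=> L; apply: contrapT => H1; apply: Hno; exists L, S.
  apply: (growth_pos2 e'0) => N.
  apply: contrapT => H2; apply: H1; exists N => n Nn; rewrite ltNge; apply/negP => H3.
  by apply: H2; exists n; split.
have [NL HNL'] := choice HNL.
pose N := maxn (\max_(K <- objs S) NL K)%nat N0.
have [n [Nn Hn]] := He N.
have n0 : (0 < n)%nat.
  move: Hn; case: n Nn => // _; rewrite mulr0n invr0 mulr0 => H.
  by exfalso; move: e0 H; lra.
have nR : (0 < n%:R :> R) by rewrite ltr0n.
rewrite ltr_pdivlMr // in Hn.
have dW0 : (0 < dW n)%nat.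
  rewrite lt0n; apply/negP => /eqP H0; rewrite /dW in H0; move: Hn; rewrite H0 ln0 //.
  by have := mulr_gt0 e0 nR; lra.
set E := maxn 1 (D n).
have E0 : (0 < E)%nat by rewrite leq_max.
have Hln : ln (dW n)%:R <= a + Q * ln E%:R.
  have H := F4 n.
  have /andP[A0p EXp] : (0 < A0)%nat && (0 < expn E q.+1)%nat.
    by rewrite -muln_gt0; apply: leq_trans dW0 H.
  have : ln ((dW n)%:R : R) <= ln (((A0 * expn E q.+1)%nat)%:R : R).
    have HP : (0 < A0 * expn E q.+1)%nat by apply: leq_trans dW0 H.
    by rewrite ler_ln ?posrE ?ltr0n ?HP // ler_nat.
  rewrite natrM natrX lnM ?posrE ?ltr0n ?exprn_gt0 ?ltr0n // lnXn ?ltr0n //.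
  by rewrite /a /Q mulr_natl.
have H2a : 2 * a < e * n%:R.
  have : 2 * a / e < n%:R.
    apply: lt_le_trans HN0 _; rewrite ler_nat; apply: leq_trans Nn.
    exact: leq_maxr.
  by rewrite ltr_pdivrMr //; lra.
have HlnE : e' * n%:R < ln E%:R.
  rewrite /e' mulrAC ltr_pdivrMr ?mulr_gt0 //.
  by move: Hn Hln H2a; lra.
have E1 : (1 < E)%nat.
  rewrite ltnNge; apply/negP => HE.
  have : ln (E%:R : R) <= 0 by apply: ln_le0; rewrite lern1.
  by have := mulr_gt0 e'0 nR; move: HlnE; lra.
have DE : E = D n by rewrite /E; apply/maxn_idPr; move: E1; rewrite /E; lia.
have D1 : (0 < D n)%nat by rewrite -DE; move: E1; lia.
have [K [HK EK]] := F2 n D1.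
have := HNL' K n _.
have NK : (NL K <= n)%nat.
  apply: leq_trans (le_bigmax_In NL HK) _; apply: leq_trans Nn; exact: leq_maxl.
move=> /(_ NK); rewrite ltr_pdivrMr // => H.
move: HlnE; rewrite DE EK; move: H; lra.
Qed.
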